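(* Let $\mathcal{G}^1$ and $\mathcal{G}^2$ be any two edge-featured graphs (as described in the context). The E-WL-EA algorithm distinguishes $\mathcal{G}^1$ and $\mathcal{G}^2$ if and only if the E-WL algorithm distinguishes them; that is, the discriminative power of E-WL-EA is the same as that of E-WL.
   Context: An edge-featured graph is $\mathcal{G}=(\mathcal{V},\mathcal{E},\mathcal{X}_V,\mathcal{X}_E)$: a finite undirected graph with no self-loops and no isolated nodes, where each node $n_i\in\mathcal{V}$ carries a discrete feature $x^n_i$ and each edge $e_{i,j}\in\mathcal{E}$ (joining $n_i$ and $n_j$) carries a discrete feature $x^e_{i,j}=x^e_{j,i}$. Write $\mathcal{N}_{(i)}$ for the set of neighbours of $n_i$, and $\{\{\cdot\}\}$ for a multiset. Both algorithms below are run on the two graphs simultaneously with the same injective function $HASH$ (equal inputs give equal outputs and distinct inputs give distinct outputs, across both graphs). E-WL (Edged Weisfeiler–Lehman): $c^{(0)}_i=x^n_i$ and $c^{(l)}_i=HASH\big(c^{(l-1)}_i,\{\{(c^{(l-1)}_j,x^e_{i,j}) : n_j\in\mathcal{N}_{(i)}\}\}\big)$. E-WL-EA (Edged Weisfeiler–Lehman with edge aggregation): $c^{(0)}_i=x^n_i$, $d^{(0)}_{i,j}=x^e_{i,j}$, and for $l\ge1$: $c^{(l)}_i=HASH\big(c^{(l-1)}_i,\{\{(c^{(l-1)}_j,d^{(l-1)}_{i,j}) : n_j\in\mathcal{N}_{(i)}\}\}\big)$, then for every edge $d^{(l)}_{i,j}=HASH\big(d^{(l-1)}_{i,j},c^{(l)}_i,c^{(l)}_j\big)$.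 For either algorithm, iteration continues until the node colours stabilize; the output for a graph is the multiset of node colours $\{\{c^{(l)}_i : n_i\in\mathcal{V}\}\}$. The algorithm distinguishes two graphs (declares them non-isomorphic) if these multisets of node colours differ for the two graphs (at some iteration $l$). *)

(* Defs.v *)
From mathcomp Require Import all_boot.
Set Implicit Arguments. Unset Strict Implicit. Unset Printing Implicit Defensive.

(* An edge-featured graph whose node/edge features take values in the
   colour type C (discrete features; c^(0) = x^n, d^(0) = x^e). *)
Record efgraph (C : eqType) := EFGraph {
  vert : finType;
  adj : rel vert;
  nfeat : vert -> C;
  efeat : vert -> vert -> C;
  adj_sym : symmetric adj;
  adj_irrefl : irreflexive adj;
  adj_noniso : forall i : vert, exists j, adj i j;
  efeat_sym : forall i j : vert, efeat i j = efeat j i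
}.

Section Defs.
Variable C : eqType.

(* HASH on inputs (colour, multiset of pairs): multisets are represented by
   sequences up to permutation; injectivity means equal outputs iff equal
   inputs (first components equal and multisets equal). *)
Definition hash_inj (h : C -> seq (C * C) -> C) : Prop :=
  forall a b (s t : seq (C * C)), h a s = h b t <-> (a = b /\ perm_eq s t).

Definition hash3_inj (h : C -> C -> C -> C) : Prop :=
  forall a b c a' b' c', h a b c = h a' b' c' -> (a, b, c) = (a', b', c').

Definition nbr_ms (G : efgraph C) (c : vert G -> C) (w : vert G -> vert G -> C)
  (i : vert G) : seq (C * C) :=
  [seq (c j, w i j) | j <- enum (vert G) & adj i j].

Fixpoint ewl (h : C -> seq (C * C) -> C) (G : efgraph C) (l : nat)
  : vert G -> C :=
  match l with
  | 0 => @nfeat C G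
  | l'.+1 => let c := @ewl h G l' in
             fun i => h (c i) (nbr_ms c (@efeat C G) i)
  end.

Fixpoint ewlea (h : C -> seq (C * C) -> C) (h3 : C -> C -> C -> C)
  (G : efgraph C) (l : nat) : (vert G -> C) * (vert G -> vert G -> C) :=
  match l with
  | 0 => (@nfeat C G, @efeat C G)
  | l'.+1 =>
      let cd := @ewlea h h3 G l' in
      let c' := fun i => h (cd.1 i) (nbr_ms cd.1 cd.2 i) in
      (c', fun i j => h3 (cd.2 i j) (c' i) (c' j))
  end.

Arguments ewl h G l : clear implicits.
Arguments ewlea h h3 G l : clear implicits.

Definition node_ms (G : efgraph C) (c : vert G -> C) : seq C :=
  [seq c v | v <- enum (vert G)].

Definition ewl_distinguishes h (G1 G2 : efgraph C) : Prop :=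
  exists l : nat, ~~ perm_eq (node_ms (ewl h G1 l)) (node_ms (ewl h G2 l)).

Definition ewlea_distinguishes h h3 (G1 G2 : efgraph C) : Prop :=
  exists l : nat,
    ~~ perm_eq (node_ms (ewlea h h3 G1 l).1) (node_ms (ewlea h h3 G2 l).1).

End Defs.

(* Main.v *)
Require Import Defs.
From mathcomp Require Import all_boot.

Lemma perm_map_transfer (A B X Y : eqType) (s : seq A) (t : seq B)
  (f : A -> X) (g : B -> X) (f' : A -> Y) (g' : B -> Y) :
  (forall x y, f x = g y <-> f' x = g' y) ->
  perm_eq (map f s) (map g t) -> perm_eq (map f' s) (map g' t).
Proof.
move=> H; elim: s t => [|x s IH] t /=.
  by move/perm_size; rewrite size_map; case: t.
move=> Hp.
have : f x \in map g t by rewrite -(perm_mem Hp) mem_head.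
case/mapP => y yt fxy.
have Ht := perm_to_rem yt.
have Hp' : perm_eq (map f s) (map g (rem y t)).
  have := perm_map g Ht; rewrite /= -fxy => Hm.
  by rewrite -(perm_cons (f x)); apply: perm_trans Hp Hm.
have Hm := perm_map g' Ht; rewrite perm_sym in Hm.
apply: perm_trans _ Hm => /=.
by rewrite (proj1 (H x y) fxy) perm_cons; apply: IH.
Qed.

Lemma perm_map_iff (A B X Y : eqType) (s : seq A) (t : seq B)
  (f : A -> X) (g : B -> X) (f' : A -> Y) (g' : B -> Y) :
  (forall x y, f x = g y <-> f' x = g' y) ->
  perm_eq (map f s) (map g t) = perm_eq (map f' s) (map g' t).
Proof.
move=> H; apply/idP/idP; apply: perm_map_transfer => // x y.
by split => /H.
Qed.

Section Main.
Variables (C : eqType) (h : C -> seq (C * C) -> C) (h3 : C -> C -> C -> C).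
Hypotheses (Hh : hash_inj h) (Hh3 : hash3_inj h3).

Lemma ewl_mono (G G' : efgraph C) l (u : vert G) (v : vert G') :
  ewl h l.+1 u = ewl h l.+1 v -> ewl h l u = ewl h l v.
Proof. by move=> /= /Hh []. Qed.

Lemma main_inv l :
  (forall (G G' : efgraph C) (u : vert G) (v : vert G'),
    (ewlea h h3 G l).1 u = (ewlea h h3 G' l).1 v <-> ewl h l u = ewl h l v) /\
  (forall (G G' : efgraph C) (u u' : vert G) (v v' : vert G'),
    (ewlea h h3 G l).2 u u' = (ewlea h h3 G' l).2 v v' <->
    (efeat u u' = efeat v v' /\
     (0 < l -> ewl h l u = ewl h l v /\ ewl h l u' = ewl h l v'))).
Proof.
elim: l => [|l [IHP IHQ]].
  by split => //= G G' u u' v v'; split => [->|[]].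
have P1 : forall (G G' : efgraph C) (u : vert G) (v : vert G'),
    (ewlea h h3 G l.+1).1 u = (ewlea h h3 G' l.+1).1 v <->
    ewl h l.+1 u = ewl h l.+1 v.
  move=> G G' u v /=.
  have key : ewl h l u = ewl h l v -> forall x y,
      ((ewlea h h3 G l).1 x, (ewlea h h3 G l).2 u x) =
      ((ewlea h h3 G' l).1 y, (ewlea h h3 G' l).2 v y) <->
      (ewl h l x, efeat u x) = (ewl h l y, efeat v y).
    move=> Euv x y; split.
      by case => /IHP Exy /IHQ [Ee _]; rewrite Exy Ee.
    case=> Exy Ee.
    rewrite (proj2 (IHP _ _ x y) Exy) (proj2 (IHQ _ _ u x v y)) //.
  split => /Hh [E1 E2]; apply: (proj2 (Hh _ _ _ _)); split.
  - by apply/IHP.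
  - by move: E2; rewrite /nbr_ms; apply: perm_map_transfer => x y; apply: key; apply/IHP.
  - by apply/IHP.
  - move: E2; rewrite /nbr_ms; apply: perm_map_transfer => x y.
    by apply: iff_sym; apply: key.
split => // G G' u u' v v' /=; split.
  move/Hh3 => [] /IHQ [Ee _] /(P1 G G' u v) E1 /(P1 G G' u' v') E2.
  by split => // _; split.
case=> Ee /(_ isT) [E1 E2].
have D : (ewlea h h3 G l).2 u u' = (ewlea h h3 G' l).2 v v'.
  by apply/IHQ; split => // _; split; apply: ewl_mono.
have := proj2 (P1 _ _ u v) E1; have := proj2 (P1 _ _ u' v') E2.
by simpl => -> ->; rewrite D.
Qed.

Lemma node_eq l (G1 G2 : efgraph C) :
  perm_eq (node_ms (ewlea h h3 G1 l).1) (node_ms (ewlea h h3 G2 l).1) =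
  perm_eq (node_ms (@ewl C h G1 l)) (node_ms (@ewl C h G2 l)).
Proof. by rewrite /node_ms; apply: perm_map_iff => x y; apply: (proj1 (main_inv l)). Qed.

End Main.

Theorem theorem2 (C : eqType) (h : C -> seq (C * C) -> C)
  (h3 : C -> C -> C -> C) (Hh : hash_inj h) (Hh3 : hash3_inj h3)
  (G1 G2 : efgraph C) :
  ewlea_distinguishes h h3 G1 G2 <-> ewl_distinguishes h G1 G2.
Proof.
by split => -[l H]; exists l; move: H; rewrite (@node_eq C h h3 Hh Hh3 l G1 G2).
Qed.
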